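(* For every integer $r\ge2$, the Dehn function of $K^3_r(r)$ satisfies $\delta_{K^3_r(r)}(N)\succcurlyeq N^4$.
   Context: For $\alpha\in\{1,2,3\}$ let $F^{(\alpha)}$ be the free group on $a^{(\alpha)}_1,\dots,a^{(\alpha)}_r$, and let $K^3_r(r)$ be the kernel of the homomorphism $F^{(1)}\times F^{(2)}\times F^{(3)}\to\mathbb Z^r$ sending each $a^{(\alpha)}_j$ to the $j$-th standard basis vector $e_j$ (it is finitely presented). The Dehn function of a finitely presented $G=\langle S\mid\mathcal R\rangle$ is $\delta_G(N)=\max\{\mathrm{Area}(w):|w|\le N,\ w=_G1\}$, where $\mathrm{Area}(w)$ is the least number of conjugates of elements of $\mathcal R^{\pm1}$ whose product is $w$ in $F(S)$. $g\succcurlyeq f$ means $f(N)\le Cg(CN+C)+CN+C$ for some $C>0$. *)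

(* Defs.v *)
From mathcomp Require Import all_boot all_order all_algebra.
Set Implicit Arguments. Unset Strict Implicit. Unset Printing Implicit Defensive.
Import GRing.Theory Num.Theory.

(* A letter over an alphabet A: (a, false) = a, (a, true) = a^-1. *)
Definition word (A : Type) := seq (A * bool).

Section FreeGroup.
Variable A : eqType.

Fixpoint freduce (w : word A) : word A :=
  match w with
  | [::] => [::]
  | x :: w' =>
      match freduce w' with
      | y :: v => if (y.1 == x.1) && (y.2 != x.2) then v else x :: y :: v
      | [::] => [:: x]
      end
  end.

Definition feq (u v : word A) : Prop := freduce u = freduce v.

Definition winv (w : word A) : word A := rev (map (fun x => (x.1, ~~ x.2)) w).

Definition wpow (w : word A) (e : bool) : word A := if e then winv w else w.

Definition area_rep (R : seq (word A)) (w : word A) (k : nat) : Prop :=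
  exists l : seq (word A * word A * bool),
    [/\ size l = k,
        all (fun p => p.1.2 \in R) l &
        feq w (flatten (map (fun p => p.1.1 ++ wpow p.1.2 p.2 ++ winv p.1.1) l))].

Definition rel_trivial (R : seq (word A)) (w : word A) : Prop :=
  exists k, area_rep R w k.

Definition is_area (R : seq (word A)) (w : word A) (n : nat) : Prop :=
  area_rep R w n /\ forall m, area_rep R w m -> n <= m.

Definition is_dehn_function (R : seq (word A)) (d : nat -> nat) : Prop :=
  forall N,
    (exists w, [/\ size w <= N, rel_trivial R w & is_area R w (d N)]) /\
    (forall w n, size w <= N -> rel_trivial R w -> is_area R w n -> n <= d N).

End FreeGroup.

Definition dehn_dominates (g f : nat -> nat) : Prop :=
  exists C : nat, 0 < C /\ forall N, f N <= C * g (C * N + C) + C * N + C.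

(* The group F^(1) x F^(2) x F^(3), each F^(α) free on a^(α)_1..a^(α)_r:
   an element is a triple of words (indexed by α : 'I_3) over 'I_r,
   equality being componentwise free equality. *)
Definition triple (r : nat) := 'I_3 -> word 'I_r.

Definition triple_eq r (t t' : triple r) : Prop := forall a, feq (t a) (t' a).

Definition expsum r (w : word 'I_r) (j : 'I_r) : int :=
  \sum_(x <- w | x.1 == j) (if x.2 then (-1)%R else 1%R).

(* K^3_r(r): kernel of the map sending every a^(α)_j to e_j in Z^r *)
Definition in_K r (t : triple r) : Prop :=
  forall j : 'I_r, (\sum_(a < 3) expsum (t a) j)%R = 0%R.

Definition eval_word r (S : Type) (phi : S -> triple r) (w : word S) : triple r :=
  fun a => flatten (map (fun x => wpow (phi x.1 a) x.2) w).

Definition presents_K r (S : finType) (phi : S -> triple r) (R : seq (word S)) : Prop :=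
  [/\ forall s, in_K (phi s),
      forall t : triple r, in_K t -> exists w : word S, triple_eq (eval_word phi w) t &
      forall w : word S, triple_eq (eval_word phi w) (fun _ => [::]) <-> rel_trivial R w].

(* Main.v *)
Require Import Defs.
From mathcomp Require Import all_boot all_order all_algebra ring zify.
From Stdlib Require Import Classical.
Set Implicit Arguments. Unset Strict Implicit. Unset Printing Implicit Defensive.
Import GRing.Theory Num.Theory.

Section Sec_FG.

Section FG.
Variable A : eqType.
Implicit Types (u v w : word A) (x y : A * bool).

Definition flipl x : A * bool := (x.1, ~~ x.2).
Definition cancl x y : bool := (y.1 == x.1) && (y.2 != x.2).

Definition cons_red x w : word A :=
  match w with
  | y :: v => if cancl x y then v else x :: y :: v
  | [::] => [:: x]
  end.

Lemma freduce_cons x w : freduce (x :: w) = cons_red x (freduce w).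
Proof. by rewrite /=; case: (freduce w). Qed.

Fixpoint reduced w : bool :=
  match w with
  | x :: v => match v with y :: _ => ~~ cancl x y && reduced v | [::] => true end
  | [::] => true
  end.

Lemma reduced_tail x w : reduced (x :: w) -> reduced w.
Proof. by case: w => //= y v /andP[]. Qed.

Lemma cons_red_reduced x w : reduced w -> reduced (cons_red x w).
Proof.
case: w => //= y v Hr; case: ifP => Hc; first exact: reduced_tail Hr.
by rewrite /= Hc Hr.
Qed.

Lemma freduce_reduced w : reduced (freduce w).
Proof. elim: w => //= x w IH; rewrite -/(cons_red x (freduce w)).
  by case: (freduce w) IH => // *; apply: cons_red_reduced. Qed.

Lemma cancl_flip x y : cancl x y -> y = flipl x.
Proof.
case: x y => [a b] [c d]; rewrite /cancl /flipl /= => /andP[/eqP -> ].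
by case: b; case: d.
Qed.

Lemma cons_red_inv x w : reduced w -> cons_red x (cons_red (flipl x) w) = w.
Proof.
case: w => [|y v] /=.
  by rewrite /cancl /flipl /= eqxx; case: x.2.
case: ifP => Hc.
  have Hy : y = x.
    move: Hc; case: x y {v} => [a b] [c e]; rewrite /cancl /flipl /=.
    by case/andP => /eqP ->; case: b; case: e.
  subst y; case: v => //= z v' /andP[Hn _]; by rewrite (negbTE Hn).
move=> _; case: x {Hc} => a b; rewrite /= /cancl /flipl /= eqxx; by case: b.
Qed.

Definition act u w := foldr cons_red w u.

Lemma act_reduced u w : reduced w -> reduced (act u w).
Proof. by elim: u => //= x u IH Hw; apply: cons_red_reduced; apply: IH. Qed.

Lemma freduce_cat u v : freduce (u ++ v) = act u (freduce v).
Proof. by elim: u => //= x u IH; rewrite -IH -freduce_cons. Qed.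

Lemma act_freduce u w : reduced w -> act u w = act (freduce u) w.
Proof.
move=> Hw; elim: u => //= x u IH; rewrite IH -/(cons_red x (freduce u)).
have := freduce_reduced u.
case: (freduce u) => //= y p _.
case: ifP => Hc //=.
by rewrite (cancl_flip Hc) cons_red_inv //; apply: act_reduced.
Qed.



Lemma freduce_id w : reduced w -> freduce w = w.
Proof.
elim: w => //= x w IH Hr; rewrite -/(cons_red x (freduce w)) IH ?(reduced_tail Hr) //.
by case: w Hr {IH} => //= y v /andP[/negbTE -> _].
Qed.

Lemma feq_cat u u' v v' : feq u u' -> feq v v' -> feq (u ++ v) (u' ++ v').
Proof.
rewrite /feq !freduce_cat => Hu ->.
by rewrite (act_freduce u (freduce_reduced _)) (act_freduce u' (freduce_reduced _)) Hu.
Qed.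

Lemma winv_cons x u : winv (x :: u) = winv u ++ [:: flipl x].
Proof. by rewrite /winv /= rev_cons cats1. Qed.

Lemma winv_cat u v : winv (u ++ v) = winv v ++ winv u.
Proof. by rewrite /winv map_cat rev_cat. Qed.

Lemma winvK u : winv (winv u) = u.
Proof. rewrite /winv map_rev revK -map_comp map_id_in // => -[a b] _ /=; by rewrite negbK. Qed.

Lemma freduce_cancel u v : freduce (u ++ winv u ++ v) = freduce v.
Proof.
elim: u v => // x u IH v; rewrite winv_cons -catA cat_cons freduce_cons IH.
rewrite cat1s freduce_cons cons_red_inv //; exact: freduce_reduced.
Qed.

Lemma feq_cancel u : feq (u ++ winv u) [::].
Proof. by rewrite /feq -(cats0 (winv u)) catA -catA freduce_cancel. Qed.

Lemma feq_winv0 u : feq u [::] -> feq (winv u) [::].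
Proof.
move=> H; have := feq_cancel (winv u); rewrite winvK => H2.
have H3 : feq (winv u ++ u) (winv u ++ [::]) by apply: feq_cat.
by rewrite /feq -H2 H3 cats0.
Qed.

End FG.

End Sec_FG.

Section Sec_GE.

Section GEval.
Variables (A : eqType) (T : Type) (mul : T -> T -> T) (one : T) (inv : T -> T).
Hypothesis mulA : forall a b c, mul a (mul b c) = mul (mul a b) c.
Hypothesis mul1 : forall a, mul one a = a.
Hypothesis mulr1 : forall a, mul a one = a.
Hypothesis mulV : forall a, mul a (inv a) = one.
Hypothesis mulVl : forall a, mul (inv a) a = one.
Variable gen : A -> T.

Definition lval (x : A * bool) : T := if x.2 then inv (gen x.1) else gen x.1.
Definition gev (w : word A) : T := foldr (fun x acc => mul (lval x) acc) one w.

Lemma gev_cat u v : gev (u ++ v) = mul (gev u) (gev v).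
Proof. by elim: u => [|x u IH] /=; rewrite ?mul1 // IH mulA. Qed.

Lemma lval_flip x : mul (lval x) (lval (flipl x)) = one.
Proof. by case: x => a [] /=; rewrite /lval /= ?mulV ?mulVl. Qed.

Lemma gev_cons_red x w : gev (cons_red x w) = mul (lval x) (gev w).
Proof.
case: w => //= y v; case: ifP => Hc //=.
by rewrite (cancl_flip Hc) mulA lval_flip mul1.
Qed.

Lemma gev_freduce w : gev (freduce w) = gev w.
Proof. elim: w => //= x w IH; by rewrite -/(cons_red x _) gev_cons_red IH. Qed.

Lemma gev_feq u v : feq u v -> gev u = gev v.
Proof. by move=> H; rewrite -gev_freduce H gev_freduce. Qed.

Lemma inv_uniq a b : mul a b = one -> inv a = b.
Proof. by move=> H; rewrite -[inv a]mulr1 -H mulA mulVl mul1. Qed.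

Lemma gev_winv u : gev (winv u) = inv (gev u).
Proof.
symmetry; apply: inv_uniq; rewrite -gev_cat.
have := feq_cancel u => H; by rewrite (gev_feq H).
Qed.

Lemma gev_wpow u e : gev (wpow u e) = if e then inv (gev u) else gev u.
Proof. by case: e => //=; rewrite gev_winv. Qed.

Lemma gev_nseq u n : gev (flatten (nseq n u)) = iter n (mul (gev u)) one.
Proof. elim: n => //= n IH; by rewrite gev_cat IH. Qed.

End GEval.

End Sec_GE.

Section Sec_G5.
Local Open Scope ring_scope.

Record g5 := mkG { gx : int; gy : int; gm : int; gs : int; gt : int }.

Definition gmul (a b : g5) : g5 :=
  mkG (gx a + gx b) (gy a + gy b) (gm a + gm b + gx a * gy b)
      (gs a + gs b + gm a * gx b + gx a * (gx b * gy b - gm b))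
      (gt a + gt b + (gx a * gy a - gm a) * gy b + gy a * gm b).
Definition gone := mkG 0 0 0 0 0.
Definition ginv (a : g5) := mkG (- gx a) (- gy a) (gx a * gy a - gm a) (- gs a) (- gt a).

Lemma gmulA a b c : gmul a (gmul b c) = gmul (gmul a b) c.
Proof. case: a b c => ? ? ? ? ? [? ? ? ? ?] [? ? ? ? ?]; rewrite /gmul /=; congr mkG; ring. Qed.
Lemma gmul1 a : gmul gone a = a.
Proof. case: a => *; rewrite /gmul /=; congr mkG; ring. Qed.
Lemma gmulr1 a : gmul a gone = a.
Proof. case: a => *; rewrite /gmul /=; congr mkG; ring. Qed.
Lemma gmulV a : gmul a (ginv a) = gone.
Proof. case: a => *; rewrite /gmul /ginv /=; congr mkG; ring. Qed.
Lemma gmulVl a : gmul (ginv a) a = gone.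
Proof. case: a => *; rewrite /gmul /ginv /=; congr mkG; ring. Qed.

Definition gX := mkG 1 0 0 0 0.
Definition gY := mkG 0 1 0 0 0.
Definition ggen r (j : 'I_r) : g5 :=
  if val j == 0%N then gX else if val j == 1%N then gY else gone.
Definition psi r (u : word 'I_r) : g5 := gev gmul gone ginv (@ggen r) u.

Lemma psi_cat r (u v : word 'I_r) : psi (u ++ v) = gmul (psi u) (psi v).
Proof. exact: (gev_cat ginv gmulA gmul1). Qed.
Lemma psi_feq r (u v : word 'I_r) : feq u v -> psi u = psi v.
Proof. exact: (gev_feq gmulA gmul1 gmulV gmulVl (@ggen r)). Qed.
Lemma psi_wpow r (u : word 'I_r) e : psi (wpow u e) = if e then ginv (psi u) else psi u.
Proof. rewrite /psi (gev_wpow gmulA gmul1 gmulr1 gmulV gmulVl). by []. Qed.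
Lemma psi_nil r : psi ([::] : word 'I_r) = gone.
Proof. by []. Qed.

Lemma expsum_cons r (x : 'I_r * bool) u j :
  expsum (x :: u) j = (if x.1 == j then (if x.2 then -1 else 1) else 0) + expsum u j.
Proof. by rewrite /expsum big_cons; case: ifP => _ //; rewrite add0r. Qed.

Lemma psi_x r (j0 : 'I_r) (h0 : val j0 = 0%N) u : gx (psi u) = expsum u j0.
Proof.
elim: u => [|x u IH]; first by rewrite /expsum big_nil.
rewrite /psi /= -/(psi u) expsum_cons -IH /lval /ggen.
have -> : (x.1 == j0) = (val x.1 == 0%N) by rewrite -h0 val_eqE.
by case: x => a [] /=; case: ifP => //= _; case: ifP.
Qed.

Lemma psi_y r (j1 : 'I_r) (h1 : val j1 = 1%N) u : gy (psi u) = expsum u j1.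
Proof.
elim: u => [|x u IH]; first by rewrite /expsum big_nil.
rewrite /psi /= -/(psi u) expsum_cons -IH /lval /ggen.
have -> : (x.1 == j1) = (val x.1 == 1%N) by rewrite -h1 val_eqE.
by case: x => a [] /=; case: ifP => /= [/eqP -> //|_]; case: ifP.
Qed.

End Sec_G5.

Section Sec_E.
Local Open Scope ring_scope.

Record E := mkE { ex1 : int; ey1 : int; em1 : int; es1 : int; et1 : int;
                  ex2 : int; ey2 : int; em2 : int; es2 : int; et2 : int;
                  em3 : int; es3 : int; et3 : int; ez : int }.

Definition Fc (a b : E) : int :=
  - 2%:Z * (es3 a)*(ey1 b) + 2%:Z * (em3 a)*(em1 b) + 2%:Z * (et2 a)*(ex1 b) + 2%:Z * (es2 a)*(ey2 b) + 2%:Z * (es2 a)*(ey1 b) + 4%:Z * (em2 a)*(em3 b) - 2%:Z * (em2 a)*(em2 b) - 2%:Z * (em2 a)*(em1 b) - 4%:Z * (em2 a)*(ex1 b)*(ey2 b) - 2%:Z * (ey2 a)*(em2 a)*(ex1 b) - 2%:Z * (ex2 a)*(et3 b) + 2%:Z * (ex2 a)*(ey2 b)*(em3 b) - 2%:Z * (ex2 a)*(ey2 b)*(em2 b) - 2%:Z * (ex2 a)*(ey1 b)*(em3 b) + 2%:Z * (ex2 a)*(ey1 b)*(em1 b) - 2%:Z * (ex2 a)*(ex1 b)*(ey2 b)*(ey2 b) - 2%:Z * (ex2 a)*(em3 a)*(ey1 b) + 2%:Z * (ex2 a)*(em2 a)*(ey1 b) - (ex2 a)*(ex2 a)*(ey1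 b)*(ey1 b) - 2%:Z * (et1 a)*(ex2 b) - 2%:Z * (es1 a)*(ey2 b) - 2%:Z * (es1 a)*(ey1 b) - 2%:Z * (em1 a)*(em3 b) + 2%:Z * (em1 a)*(em2 b) + 4%:Z * (em1 a)*(ey1 b)*(ex2 b) + 2%:Z * (em1 a)*(ex2 a)*(ey1 b) + 2%:Z * (ey1 a)*(em1 a)*(ex2 b) + 2%:Z * (ex1 a)*(em1 b)*(ey2 b) - 2%:Z * (ex1 a)*(ey1 b)*(em3 b) + 2%:Z * (ex1 a)*(ey1 b)*(em2 b) + 2%:Z * (ex1 a)*(ey1 b)*(em1 b) + 2%:Z * (ex1 a)*(ey1 b)*(ey1 b)*(ex2 b) + 2%:Z * (ex1 a)*(em2 a)*(ey1 b).

Definition emul (a b : E) : E :=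
  let x3a := - (ex1 a + ex2 a) in let y3a := - (ey1 a + ey2 a) in
  let x3b := - (ex1 b + ex2 b) in let y3b := - (ey1 b + ey2 b) in
  mkE (ex1 a + ex1 b) (ey1 a + ey1 b) (em1 a + em1 b + ex1 a * ey1 b)
      (es1 a + es1 b + em1 a * ex1 b + ex1 a * (ex1 b * ey1 b - em1 b))
      (et1 a + et1 b + (ex1 a * ey1 a - em1 a) * ey1 b + ey1 a * em1 b)
      (ex2 a + ex2 b) (ey2 a + ey2 b) (em2 a + em2 b + ex2 a * ey2 b)
      (es2 a + es2 b + em2 a * ex2 b + ex2 a * (ex2 b * ey2 b - em2 b))
      (et2 a + et2 b + (ex2 a * ey2 a - em2 a) * ey2 b + ey2 a * em2 b)
      (em3 a + em3 b + x3a * y3b)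
      (es3 a + es3 b + em3 a * x3b + x3a * (x3b * y3b - em3 b))
      (et3 a + et3 b + (x3a * y3a - em3 a) * y3b + y3a * em3 b)
      (ez a + ez b + Fc a b).

Definition eone : E := mkE 0 0 0 0 0 0 0 0 0 0 0 0 0 0.

Definition eqinv (a : E) : E :=
  mkE (- ex1 a) (- ey1 a) (ex1 a * ey1 a - em1 a) (- es1 a) (- et1 a)
      (- ex2 a) (- ey2 a) (ex2 a * ey2 a - em2 a) (- es2 a) (- et2 a)
      ((ex1 a + ex2 a) * (ey1 a + ey2 a) - em3 a) (- es3 a) (- et3 a) 0.

Definition einv (a : E) : E :=
  let q := eqinv a in
  mkE (ex1 q) (ey1 q) (em1 q) (es1 q) (et1 q) (ex2 q) (ey2 q) (em2 q) (es2 q) (et2 q)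
      (em3 q) (es3 q) (et3 q) (- (ez a + Fc a q)).

Lemma emulA (a b c : E) : emul a (emul b c) = emul (emul a b) c.
Proof.
case: a => ? ? ? ? ? ? ? ? ? ? ? ? ? ?; case: b => ? ? ? ? ? ? ? ? ? ? ? ? ? ?;
case: c => ? ? ? ? ? ? ? ? ? ? ? ? ? ?.
rewrite /emul /Fc /=; congr mkE; ring.
Qed.

Lemma emul1e (a : E) : emul eone a = a.
Proof. case: a => *; rewrite /emul /Fc /=; congr mkE; ring. Qed.
Lemma emule1 (a : E) : emul a eone = a.
Proof. case: a => *; rewrite /emul /Fc /=; congr mkE; ring. Qed.
Lemma emulV (a : E) : emul a (einv a) = eone.
Proof. case: a => *; rewrite /emul /einv /eqinv /Fc /=; congr mkE; ring. Qed.
Lemma emulVl (a : E) : emul (einv a) a = eone.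
Proof. case: a => *; rewrite /emul /einv /eqinv /Fc /=; congr mkE; ring. Qed.

End Sec_E.

Section Sec_M1.
Local Open Scope ring_scope.

Definition a0 : 'I_3 := @Ordinal 3 0 isT.
Definition a1 : 'I_3 := @Ordinal 3 1 isT.
Definition a2 : 'I_3 := @Ordinal 3 2 isT.

Definition toE (g1 g2 g3 : g5) (z : int) : E :=
  mkE (gx g1) (gy g1) (gm g1) (gs g1) (gt g1) (gx g2) (gy g2) (gm g2) (gs g2) (gt g2)
      (gm g3) (gs g3) (gt g3) z.
Definition cstr (g1 g2 g3 : g5) : Prop :=
  gx g1 + gx g2 + gx g3 = 0 /\ gy g1 + gy g2 + gy g3 = 0.

Lemma toE_mul g1 g2 g3 h1 h2 h3 z z' : cstr g1 g2 g3 -> cstr h1 h2 h3 ->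
  emul (toE g1 g2 g3 z) (toE h1 h2 h3 z') =
  toE (gmul g1 h1) (gmul g2 h2) (gmul g3 h3) (ez (emul (toE g1 g2 g3 z) (toE h1 h2 h3 z'))).
Proof.
case: g1 g2 g3 h1 h2 h3 => x1 y1 ? ? ? [x2 y2 ? ? ?] [x3 y3 ? ? ?] [u1 v1 ? ? ?] [u2 v2 ? ? ?] [u3 v3 ? ? ?].
rewrite /cstr /= => -[Hx Hy] [Hx' Hy'].
have -> : x3 = - (x1 + x2) by lia.
have -> : y3 = - (y1 + y2) by lia.
have -> : u3 = - (u1 + u2) by lia.
have -> : v3 = - (v1 + v2) by lia.
rewrite /emul /toE /gmul /=; congr mkE; ring.
Qed.

Lemma toE_inv g1 g2 g3 z : cstr g1 g2 g3 ->
  einv (toE g1 g2 g3 z) = toE (ginv g1) (ginv g2) (ginv g3) (ez (einv (toE g1 g2 g3 z))).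
Proof.
case: g1 g2 g3 => x1 y1 ? ? ? [x2 y2 ? ? ?] [x3 y3 ? ? ?].
rewrite /cstr /= => -[Hx Hy].
have -> : x3 = - (x1 + x2) by lia.
have -> : y3 = - (y1 + y2) by lia.
rewrite /einv /eqinv /toE /ginv /=; congr mkE; ring.
Qed.

Lemma cstr_mul g1 g2 g3 h1 h2 h3 : cstr g1 g2 g3 -> cstr h1 h2 h3 ->
  cstr (gmul g1 h1) (gmul g2 h2) (gmul g3 h3).
Proof. rewrite /cstr /gmul /=; lia. Qed.

Lemma cstr_inv g1 g2 g3 : cstr g1 g2 g3 -> cstr (ginv g1) (ginv g2) (ginv g3).
Proof. rewrite /cstr /ginv /=; lia. Qed.

Definition cE (z : int) : E := toE gone gone gone z.

Lemma einv_cE z : einv (cE z) = cE (- z).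
Proof. rewrite /einv /eqinv /cE /toE /Fc /=; congr mkE; ring. Qed.

Lemma emul_cE z z' : emul (cE z) (cE z') = cE (z + z').
Proof. rewrite /emul /cE /toE /Fc /=; congr mkE; ring. Qed.

Lemma cE_comm a z : emul (cE z) a = emul a (cE z).
Proof. case: a => *; rewrite /emul /cE /toE /Fc /=; congr mkE; ring. Qed.

Lemma conj_cE a z : emul a (emul (cE z) (einv a)) = cE z.
Proof. by rewrite cE_comm emulA emulV emul1e. Qed.

End Sec_M1.

Section Sec_M2.
Local Open Scope ring_scope.

Section Theta.
Variables (r : nat) (S : finType) (phi : S -> triple r).

Definition gE (s : S) : E := toE (psi (phi s a0)) (psi (phi s a1)) (psi (phi s a2)) 0.
Definition Theta (w : word S) : E := gev emul eone einv gE w.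

Lemma eval_nil a : eval_word phi [::] a = [::].
Proof. by []. Qed.
Lemma eval_cons x w a : eval_word phi (x :: w) a = wpow (phi x.1 a) x.2 ++ eval_word phi w a.
Proof. by []. Qed.
Lemma eval_cat u v a : eval_word phi (u ++ v) a = eval_word phi u a ++ eval_word phi v a.
Proof. by rewrite /eval_word map_cat flatten_cat. Qed.

Lemma wpow_neg (u : word 'I_r) e : wpow u (~~ e) = winv (wpow u e).
Proof. by case: e => //=; rewrite winvK. Qed.

Lemma eval_winv u a : eval_word phi (winv u) a = winv (eval_word phi u a).
Proof.
elim: u => [|x u IH] //; rewrite winv_cons eval_cat IH eval_cons winv_cat.
by rewrite /eval_word /= cats0 wpow_neg.
Qed.

Lemma eval_nseq u n a : eval_word phi (flatten (nseq n u)) a = flatten (nseq n (eval_word phi u a)).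
Proof. by elim: n => //= n IH; rewrite eval_cat IH. Qed.

Lemma Theta_cat u v : Theta (u ++ v) = emul (Theta u) (Theta v).
Proof. exact: (gev_cat einv emulA emul1e). Qed.
Lemma Theta_feq u v : feq u v -> Theta u = Theta v.
Proof. exact: (gev_feq emulA emul1e emulV emulVl gE). Qed.
Lemma Theta_winv u : Theta (winv u) = einv (Theta u).
Proof. rewrite /Theta (gev_winv emulA emul1e emule1 emulV emulVl). by []. Qed.
Lemma Theta_wpow u e : Theta (wpow u e) = if e then einv (Theta u) else Theta u.
Proof. rewrite /Theta (gev_wpow emulA emul1e emule1 emulV emulVl). by []. Qed.
Lemma Theta_nseq u n : Theta (flatten (nseq n u)) = iter n (emul (Theta u)) eone.
Proof. exact: (gev_nseq einv emulA emul1e). Qed.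

Hypothesis hK : forall s, cstr (psi (phi s a0)) (psi (phi s a1)) (psi (phi s a2)).

Lemma Theta_eval w :
  cstr (psi (eval_word phi w a0)) (psi (eval_word phi w a1)) (psi (eval_word phi w a2)) /\
  Theta w = toE (psi (eval_word phi w a0)) (psi (eval_word phi w a1)) (psi (eval_word phi w a2))
               (ez (Theta w)).
Proof.
elim: w => [|x w [Hc IH]]; first by split.
rewrite !eval_cons !psi_cat !psi_wpow.
have -> : Theta (x :: w) = emul (if x.2 then einv (gE x.1) else gE x.1) (Theta w) by [].
case: x.2.
  have Hi := cstr_inv (hK x.1).
  split; first exact: cstr_mul.
  rewrite /gE toE_inv ?hK // IH toE_mul //.
have Hi := hK x.1.
split; first exact: cstr_mul.
rewrite /gE IH toE_mul //.
Qed.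

Lemma Theta_triv w : triple_eq (eval_word phi w) (fun _ => [::]) -> Theta w = cE (ez (Theta w)).
Proof.
move=> H; have [_ ->] := Theta_eval w.
rewrite /cE !(psi_feq (H _)) //.
Qed.

End Theta.

End Sec_M2.

Section Sec_M3.
Local Open Scope ring_scope.

Definition Ea (z : int) := mkE 1 0 0 0 0 (-1) 0 0 0 0 0 0 0 z.
Definition Eb (z : int) := mkE 0 1 0 0 0 0 0 0 0 0 0 0 0 z.
Definition Ec (z : int) := mkE 0 0 0 0 0 0 1 0 0 0 0 0 0 z.

Lemma pow_Ea z n : iter n (emul (Ea z)) eone = mkE ((1)*n%:Z) 0 0 0 0 ((-1)*n%:Z) 0 0 0 0 0 0 0 ((1)*n%:Z*z).
Proof.
elim: n => [|n IH]; first by rewrite /eone /=; congr mkE; ring.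
rewrite iterS IH intS /emul /Ea /Fc /=; congr mkE; ring.
Qed.
Lemma pow_Eb z n : iter n (emul (Eb z)) eone = mkE 0 ((1)*n%:Z) 0 0 0 0 0 0 0 0 0 0 0 ((1)*n%:Z*z).
Proof.
elim: n => [|n IH]; first by rewrite /eone /=; congr mkE; ring.
rewrite iterS IH intS /emul /Eb /Fc /=; congr mkE; ring.
Qed.
Lemma pow_Ec z n : iter n (emul (Ec z)) eone = mkE 0 0 0 0 0 0 ((1)*n%:Z) 0 0 0 0 0 0 ((1)*n%:Z*z).
Proof.
elim: n => [|n IH]; first by rewrite /eone /=; congr mkE; ring.
rewrite iterS IH intS /emul /Ec /Fc /=; congr mkE; ring.
Qed.

Definition ecomm (a b : E) := emul a (emul b (emul (einv a) (einv b))).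

Definition PAe (n za : int) := (mkE ((1)*n) 0 0 0 0 ((-1)*n) 0 0 0 0 0 0 0 ((1)*n*za)).
Definition PBe (n zb : int) := (mkE 0 ((1)*n) 0 0 0 0 0 0 0 0 0 0 0 ((1)*n*zb)).
Definition PCe (n zc : int) := (mkE 0 0 0 0 0 0 ((1)*n) 0 0 0 0 0 0 ((1)*n*zc)).

Lemma st1 (n za zb zc : int) : einv (mkE ((1)*n) 0 0 0 0 ((-1)*n) 0 0 0 0 0 0 0 ((1)*n*za)) = (mkE ((-1)*n) 0 0 0 0 ((1)*n) 0 0 0 0 0 0 0 ((-1)*n*za)).
Proof. rewrite /einv /eqinv /Fc /=; congr mkE; ring. Qed.

Lemma st2 (n za zb zc : int) : einv (mkE ((1)*n) 0 0 0 0 ((-1)*n) 0 0 0 0 0 0 0 ((1)*n*za)) = (mkE ((-1)*n) 0 0 0 0 ((1)*n) 0 0 0 0 0 0 0 ((-1)*n*za)).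
Proof. rewrite /einv /eqinv /Fc /=; congr mkE; ring. Qed.

Lemma st3 (n za zb zc : int) : einv (mkE 0 ((1)*n) 0 0 0 0 0 0 0 0 0 0 0 ((1)*n*zb)) = (mkE 0 ((-1)*n) 0 0 0 0 0 0 0 0 0 0 0 ((-1)*n*zb)).
Proof. rewrite /einv /eqinv /Fc /=; congr mkE; ring. Qed.

Lemma st4 (n za zb zc : int) : emul (mkE ((-1)*n) 0 0 0 0 ((1)*n) 0 0 0 0 0 0 0 ((-1)*n*za)) (mkE 0 ((-1)*n) 0 0 0 0 0 0 0 0 0 0 0 ((-1)*n*zb)) = (mkE ((-1)*n) ((-1)*n) ((1)*n^+2) 0 0 ((1)*n) 0 0 0 0 0 0 0 ((-1)*n*za + (-1)*n*zb + (-1)*n^+4)).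
Proof. rewrite /emul /Fc /=; congr mkE; ring. Qed.

Lemma st5 (n za zb zc : int) : emul (mkE 0 ((1)*n) 0 0 0 0 0 0 0 0 0 0 0 ((1)*n*zb)) (mkE ((-1)*n) ((-1)*n) ((1)*n^+2) 0 0 ((1)*n) 0 0 0 0 0 0 0 ((-1)*n*za + (-1)*n*zb + (-1)*n^+4)) = (mkE ((-1)*n) 0 ((1)*n^+2) 0 ((1)*n^+3) ((1)*n) 0 0 0 0 0 0 0 ((-1)*n*za + (-1)*n^+4)).
Proof. rewrite /emul /Fc /=; congr mkE; ring. Qed.

Lemma st6 (n za zb zc : int) : emul (mkE ((1)*n) 0 0 0 0 ((-1)*n) 0 0 0 0 0 0 0 ((1)*n*za)) (mkE ((-1)*n) 0 ((1)*n^+2) 0 ((1)*n^+3) ((1)*n) 0 0 0 0 0 0 0 ((-1)*n*za + (-1)*n^+4)) = (mkE 0 0 ((1)*n^+2) ((-1)*n^+3) ((1)*n^+3) 0 0 0 0 0 0 0 0 ((-1)*n^+4)).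
Proof. rewrite /emul /Fc /=; congr mkE; ring. Qed.

Lemma C1_eq (n za zb zc : int) : ecomm (mkE ((1)*n) 0 0 0 0 ((-1)*n) 0 0 0 0 0 0 0 ((1)*n*za)) (mkE 0 ((1)*n) 0 0 0 0 0 0 0 0 0 0 0 ((1)*n*zb)) = (mkE 0 0 ((1)*n^+2) ((-1)*n^+3) ((1)*n^+3) 0 0 0 0 0 0 0 0 ((-1)*n^+4)).
Proof. by rewrite /ecomm (st2 n za zb zc) (st3 n za zb zc) (st4 n za zb zc) (st5 n za zb zc) (st6 n za zb zc). Qed.

Lemma st7 (n za zb zc : int) : einv (mkE ((-1)*n) 0 0 0 0 ((1)*n) 0 0 0 0 0 0 0 ((-1)*n*za)) = (mkE ((1)*n) 0 0 0 0 ((-1)*n) 0 0 0 0 0 0 0 ((1)*n*za)).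
Proof. rewrite /einv /eqinv /Fc /=; congr mkE; ring. Qed.

Lemma st8 (n za zb zc : int) : einv (mkE 0 0 0 0 0 0 ((1)*n) 0 0 0 0 0 0 ((1)*n*zc)) = (mkE 0 0 0 0 0 0 ((-1)*n) 0 0 0 0 0 0 ((-1)*n*zc)).
Proof. rewrite /einv /eqinv /Fc /=; congr mkE; ring. Qed.

Lemma st9 (n za zb zc : int) : emul (mkE ((1)*n) 0 0 0 0 ((-1)*n) 0 0 0 0 0 0 0 ((1)*n*za)) (mkE 0 0 0 0 0 0 ((-1)*n) 0 0 0 0 0 0 ((-1)*n*zc)) = (mkE ((1)*n) 0 0 0 0 ((-1)*n) ((-1)*n) ((1)*n^+2) 0 0 0 0 0 ((1)*n*za + (-1)*n*zc)).
Proof. rewrite /emul /Fc /=; congr mkE; ring. Qed.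

Lemma st10 (n za zb zc : int) : emul (mkE 0 0 0 0 0 0 ((1)*n) 0 0 0 0 0 0 ((1)*n*zc)) (mkE ((1)*n) 0 0 0 0 ((-1)*n) ((-1)*n) ((1)*n^+2) 0 0 0 0 0 ((1)*n*za + (-1)*n*zc)) = (mkE ((1)*n) 0 0 0 0 ((-1)*n) 0 ((1)*n^+2) 0 ((1)*n^+3) 0 0 0 ((1)*n*za)).
Proof. rewrite /emul /Fc /=; congr mkE; ring. Qed.

Lemma st11 (n za zb zc : int) : emul (mkE ((-1)*n) 0 0 0 0 ((1)*n) 0 0 0 0 0 0 0 ((-1)*n*za)) (mkE ((1)*n) 0 0 0 0 ((-1)*n) 0 ((1)*n^+2) 0 ((1)*n^+3) 0 0 0 ((1)*n*za)) = (mkE 0 0 0 0 0 0 0 ((1)*n^+2) ((-1)*n^+3) ((1)*n^+3) 0 0 0 0).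
Proof. rewrite /emul /Fc /=; congr mkE; ring. Qed.

Lemma C2_eq (n za zb zc : int) : ecomm (mkE ((-1)*n) 0 0 0 0 ((1)*n) 0 0 0 0 0 0 0 ((-1)*n*za)) (mkE 0 0 0 0 0 0 ((1)*n) 0 0 0 0 0 0 ((1)*n*zc)) = (mkE 0 0 0 0 0 0 0 ((1)*n^+2) ((-1)*n^+3) ((1)*n^+3) 0 0 0 0).
Proof. by rewrite /ecomm (st7 n za zb zc) (st8 n za zb zc) (st9 n za zb zc) (st10 n za zb zc) (st11 n za zb zc). Qed.

Lemma st12 (n za zb zc : int) : einv (mkE 0 0 ((1)*n^+2) ((-1)*n^+3) ((1)*n^+3) 0 0 0 0 0 0 0 0 ((-1)*n^+4)) = (mkE 0 0 ((-1)*n^+2) ((1)*n^+3) ((-1)*n^+3) 0 0 0 0 0 0 0 0 ((1)*n^+4)).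
Proof. rewrite /einv /eqinv /Fc /=; congr mkE; ring. Qed.

Lemma st13 (n za zb zc : int) : einv (mkE 0 0 0 0 0 0 0 ((1)*n^+2) ((-1)*n^+3) ((1)*n^+3) 0 0 0 0) = (mkE 0 0 0 0 0 0 0 ((-1)*n^+2) ((1)*n^+3) ((-1)*n^+3) 0 0 0 ((-2)*n^+4)).
Proof. rewrite /einv /eqinv /Fc /=; congr mkE; ring. Qed.

Lemma st14 (n za zb zc : int) : emul (mkE 0 0 ((-1)*n^+2) ((1)*n^+3) ((-1)*n^+3) 0 0 0 0 0 0 0 0 ((1)*n^+4)) (mkE 0 0 0 0 0 0 0 ((-1)*n^+2) ((1)*n^+3) ((-1)*n^+3) 0 0 0 ((-2)*n^+4)) = (mkE 0 0 ((-1)*n^+2) ((1)*n^+3) ((-1)*n^+3) 0 0 ((-1)*n^+2) ((1)*n^+3) ((-1)*n^+3) 0 0 0 ((1)*n^+4)).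
Proof. rewrite /emul /Fc /=; congr mkE; ring. Qed.

Lemma st15 (n za zb zc : int) : emul (mkE 0 0 0 0 0 0 0 ((1)*n^+2) ((-1)*n^+3) ((1)*n^+3) 0 0 0 0) (mkE 0 0 ((-1)*n^+2) ((1)*n^+3) ((-1)*n^+3) 0 0 ((-1)*n^+2) ((1)*n^+3) ((-1)*n^+3) 0 0 0 ((1)*n^+4)) = (mkE 0 0 ((-1)*n^+2) ((1)*n^+3) ((-1)*n^+3) 0 0 0 0 0 0 0 0 ((5)*n^+4)).
Proof. rewrite /emul /Fc /=; congr mkE; ring. Qed.

Lemma st16 (n za zb zc : int) : emul (mkE 0 0 ((1)*n^+2) ((-1)*n^+3) ((1)*n^+3) 0 0 0 0 0 0 0 0 ((-1)*n^+4)) (mkE 0 0 ((-1)*n^+2) ((1)*n^+3) ((-1)*n^+3) 0 0 0 0 0 0 0 0 ((5)*n^+4)) = (mkE 0 0 0 0 0 0 0 0 0 0 0 0 0 ((4)*n^+4)).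
Proof. rewrite /emul /Fc /=; congr mkE; ring. Qed.

Lemma W_eq (n za zb zc : int) : ecomm (mkE 0 0 ((1)*n^+2) ((-1)*n^+3) ((1)*n^+3) 0 0 0 0 0 0 0 0 ((-1)*n^+4)) (mkE 0 0 0 0 0 0 0 ((1)*n^+2) ((-1)*n^+3) ((1)*n^+3) 0 0 0 0) = (mkE 0 0 0 0 0 0 0 0 0 0 0 0 0 ((4)*n^+4)).
Proof. by rewrite /ecomm (st12 n za zb zc) (st13 n za zb zc) (st14 n za zb zc) (st15 n za zb zc) (st16 n za zb zc). Qed.

End Sec_M3.

Section Sec_M4.

Definition comw (A : eqType) (u v : word A) : word A := u ++ v ++ winv u ++ winv v.

Lemma feq_comw_l (A : eqType) (u v : word A) : feq u [::] -> feq (comw u v) [::].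
Proof.
move=> H; have H1 := feq_winv0 H.
have : feq (u ++ v ++ winv u ++ winv v) ([::] ++ v ++ [::] ++ winv v).
  apply: feq_cat H _; apply: feq_cat (erefl _) _; exact: feq_cat H1 (erefl _).
rewrite /comw /feq => ->; exact: feq_cancel.
Qed.

Lemma feq_comw_r (A : eqType) (u v : word A) : feq v [::] -> feq (comw u v) [::].
Proof.
move=> H; have H1 := feq_winv0 H.
have : feq (u ++ v ++ winv u ++ winv v) (u ++ [::] ++ winv u ++ [::]).
  apply: feq_cat (erefl _) _; apply: feq_cat H _; exact: feq_cat (erefl _) H1.
rewrite /comw /feq => ->; rewrite cats0 /=; exact: feq_cancel.
Qed.

Lemma feq_nseq0 (A : eqType) (u : word A) n : feq u [::] -> feq (flatten (nseq n u)) [::].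
Proof. move=> H; elim: n => //= n IH; exact: (feq_cat H IH). Qed.

Lemma size_winv (A : eqType) (u : word A) : size (winv u) = size u.
Proof. by rewrite /winv size_rev size_map. Qed.

Lemma size_nseqw (A : eqType) (u : word A) n : size (flatten (nseq n u)) = (n * size u)%N.
Proof. elim: n => //= n IH; by rewrite size_cat IH mulSn. Qed.

Lemma size_comw (A : eqType) (u v : word A) : size (comw u v) = (2 * (size u + size v))%N.
Proof. rewrite /comw !size_cat !size_winv; lia. Qed.

Lemma sum3 (F : 'I_3 -> int) : (\sum_(a < 3) F a = F a0 + F a1 + F a2)%R.
Proof.
rewrite !big_ord_recl big_ord0 addr0 addrA; congr (F _ + F _ + F _)%R; exact: val_inj.
Qed.

Lemma ex_min (P : nat -> Prop) k : P k -> exists m, P m /\ forall k', P k' -> (m <= k')%N.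
Proof.
elim: k {-2}k (leqnn k) => [|n IH] k Hk HP.
  move: Hk; rewrite leqn0 => /eqP Hk; subst k; exists 0%N; split => //.
case: (classic (exists k', (k' < k)%N /\ P k')) => [[k' [Hlt HP']]|Hno].
  apply: (IH k') => //; lia.
exists k; split => // k' HP'; rewrite leqNgt; apply/negP => Hlt; apply: Hno; by exists k'.
Qed.

Section Main.
Variables (r : nat) (S : finType) (phi : S -> triple r) (R : seq (word S)).
Hypothesis hR : forall q, q \in R -> Theta phi q = cE (ez (Theta phi q)).
Local Notation B := (\sum_(q <- R) absz (ez (Theta phi q)))%N.

Lemma area_bound w k : area_rep R w k -> (absz (ez (Theta phi w)) <= k * B)%N.
Proof.
case=> l [<- Hall Hfeq]; rewrite (Theta_feq phi Hfeq) {Hfeq w}.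
suff : Theta phi (flatten (map (fun p => p.1.1 ++ wpow p.1.2 p.2 ++ winv p.1.1) l)) =
       cE (ez (Theta phi (flatten (map (fun p => p.1.1 ++ wpow p.1.2 p.2 ++ winv p.1.1) l)))) /\
       (absz (ez (Theta phi (flatten (map (fun p => p.1.1 ++ wpow p.1.2 p.2 ++ winv p.1.1) l))))
          <= size l * B)%N by case.
elim: l Hall => [|p l IH] //= /andP[Hp Hall].
have [IH1 IH2] := IH Hall.
have Hz : (absz (ez (Theta phi p.1.2)) <= B)%N.
  by rewrite (big_rem _ Hp) /= leq_addr.
set rest := flatten _.
have HT : Theta phi ((p.1.1 ++ wpow p.1.2 p.2 ++ winv p.1.1) ++ rest) =
    cE ((if p.2 then - ez (Theta phi p.1.2) else ez (Theta phi p.1.2)) + ez (Theta phi rest))%R.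
  rewrite Theta_cat IH1 !Theta_cat Theta_winv Theta_wpow (hR Hp).
  by case: p.2; rewrite ?einv_cE conj_cE emul_cE.
rewrite HT /=; split => //; rewrite mulSn; move: IH2 Hz.
rewrite -/rest; set u := (size l * B)%N; case: p.2 => /=; lia.
Qed.

End Main.

End Sec_M4.

Section Sec_M5.

Lemma eval_comw r (S : finType) (phi : S -> triple r) u v a :
  eval_word phi (comw u v) a = comw (eval_word phi u a) (eval_word phi v a).
Proof. by rewrite /comw !eval_cat !eval_winv. Qed.

Lemma Theta_comw r (S : finType) (phi : S -> triple r) u v :
  Theta phi (comw u v) = ecomm (Theta phi u) (Theta phi v).
Proof. by rewrite /comw !Theta_cat !Theta_winv. Qed.


End Sec_M5.

Theorem corollary4p17 (r : nat) (hr : 2 <= r)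
  (S : finType) (phi : S -> triple r) (R : seq (word S))
  (hP : presents_K phi R) (d : nat -> nat) (hd : is_dehn_function R d) :
  dehn_dominates d (fun N => N ^ 4).
Proof.
case: hP => hKin hsurj hker.
have h0r : (0 < r)%N by apply: leq_trans hr.
have h1r : (1 < r)%N by [].
pose j0 : 'I_r := Ordinal h0r. pose j1 : 'I_r := Ordinal h1r.
have hK : forall s, cstr (psi (phi s a0)) (psi (phi s a1)) (psi (phi s a2)).
  move=> s; rewrite /cstr !(@psi_x r j0) // !(@psi_y r j1) //.
  by split; [have := hKin s j0 | have := hKin s j1]; rewrite sum3.
have hR : forall q, q \in R -> Theta phi q = cE (ez (Theta phi q)).
  move=> q Hq; apply: (Theta_triv hK); apply: (proj2 (hker q)).
  exists 1%N; exists [:: (([::], q), false)]; split; [by [] | by rewrite /= Hq | ].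
  by rewrite /feq /= /winv /= !cats0.
pose tA : triple r := fun a => if val a == 0%N then [:: (j0,false)]
   else if val a == 1%N then [:: (j0,true)] else [::].
pose tB : triple r := fun a => if val a == 0%N then [:: (j1,false)]
   else if val a == 1%N then [::] else [:: (j1,true)].
pose tC : triple r := fun a => if val a == 0%N then [::]
   else if val a == 1%N then [:: (j1,false)] else [:: (j1,true)].
have kA : in_K tA.
  move=> j; rewrite sum3 /tA /= /expsum !big_cons !big_nil /=.
  by case: (_ == j); rewrite /= ?addr0 ?subrr.
have kB : in_K tB.
  move=> j; rewrite sum3 /tB /= /expsum !big_cons !big_nil /=.
  by case: (_ == j); rewrite /= ?addr0 ?subrr.
have kC : in_K tC.
  move=> j; rewrite sum3 /tC /= /expsum !big_cons !big_nil /=.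
  by case: (_ == j); rewrite /= ?addr0 ?add0r ?subrr.
have [wA HA] := hsurj tA kA.
have [wB HB] := hsurj tB kB.
have [wC HC] := hsurj tC kC.
have TA : Theta phi wA = Ea (ez (Theta phi wA)).
  have [_ ->] := Theta_eval hK wA.
  rewrite !(psi_feq (HA _)) /tA /= /psi /= /lval /= /ggen /=.
  rewrite /toE /Ea /gmul /ginv /gX /gone /=; congr mkE; ring.
have TB : Theta phi wB = Eb (ez (Theta phi wB)).
  have [_ ->] := Theta_eval hK wB.
  rewrite !(psi_feq (HB _)) /tB /= /psi /= /lval /= /ggen /=.
  rewrite /toE /Eb /gmul /ginv /gY /gone /=; congr mkE; ring.
have TC : Theta phi wC = Ec (ez (Theta phi wC)).
  have [_ ->] := Theta_eval hK wC.
  rewrite !(psi_feq (HC _)) /tC /= /psi /= /lval /= /ggen /=.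
  rewrite /toE /Ec /gmul /ginv /gY /gone /=; congr mkE; ring.
set zA := ez (Theta phi wA); set zB := ez (Theta phi wB); set zC := ez (Theta phi wC).
pose B := (\sum_(q <- R) absz (ez (Theta phi q)))%N.
pose L := (4 * (2 * size wA + size wB + size wC))%N.
exists (L + B + 1)%N; split; first by rewrite addn1.
move=> N.
pose An := flatten (nseq N wA); pose Bn := flatten (nseq N wB); pose Cn := flatten (nseq N wC).
pose Wn := comw (comw An Bn) (comw (winv An) Cn).
have TW : ez (Theta phi Wn) = ((4) * (N%:Z) ^+ 4)%R.
  rewrite /Wn !Theta_comw Theta_winv /An /Bn /Cn !Theta_nseq TA TB TC pow_Ea pow_Eb pow_Ec.
  rewrite (st1 N%:Z zA 0 0) (C1_eq N%:Z zA zB 0) (C2_eq N%:Z zA 0 zC) (W_eq N%:Z 0 0 0) /=.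
  by [].
have relW : rel_trivial R Wn.
  apply: (proj1 (hker Wn)) => a.
  rewrite /Wn !eval_comw eval_winv /An /Bn /Cn !eval_nseq.
  case: a => [[|[|[|//]]] Ha].
  - apply: feq_comw_r; apply: feq_comw_r; apply: feq_nseq0; exact: (HC (Ordinal Ha)).
  - apply: feq_comw_l; apply: feq_comw_r; apply: feq_nseq0; exact: (HB (Ordinal Ha)).
  - apply: feq_comw_l; apply: feq_comw_l; apply: feq_nseq0; exact: (HA (Ordinal Ha)).
have [k Hk] := relW.
have [k0 [Hk0 Hmin]] := ex_min Hk.
have Hsize : (size Wn <= (L + B + 1) * N + (L + B + 1))%N.
  rewrite /Wn !size_comw size_winv /An /Bn /Cn !size_nseqw.
  have -> : (2 * (2 * (N * size wA + N * size wB) + 2 * (N * size wA + N * size wC)) = L * N)%N.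
    by rewrite /L; ring.
  apply: leq_trans (leq_addr _ _); apply: leq_mul => //; lia.
have Hd := (hd ((L + B + 1) * N + (L + B + 1))%N).2 Wn k0 Hsize relW (conj Hk0 Hmin).
have Hb := area_bound hR Hk0.
rewrite TW in Hb.
have E4 : ((4) * (N%:Z) ^+ 4)%R = Posz (4 * N ^ 4)%N.
  by rewrite !expnS expn0 muln1 !PoszM !exprS expr0 mulr1.
rewrite E4 absz_nat in Hb.
set C := (L + B + 1)%N in Hd *.
set D := d _ in Hd *.
have HBC : (k0 * B <= D * C)%N by apply: leq_mul => //; rewrite /C; lia.
rewrite [(C * D)%N]mulnC.
move: Hb HBC; set P := (k0 * B)%N; set Q := (D * C)%N; set M := (N ^ 4)%N.
set CN := (C * N)%N; lia.
Qed.
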